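(* Let $\mathcal{G}$ be a finite simple graph, let $k\geq 1$, and let $\mathcal{G}^{k+1}$ be its $(k+1)$-core. Then for every $j\ge k$, every $j$-cycle of the clique complex $\widehat{\mathcal{G}}$ (i.e. every element of $\ker\partial_j$ in the simplicial chain complex $C_\bullet(\widehat{\mathcal{G}})$) is supported on simplices of $\widehat{\mathcal{G}^{k+1}}$, every $(j+1)$-simplex of $\widehat{\mathcal{G}}$ lies in $\widehat{\mathcal{G}^{k+1}}$, and consequently the inclusion $\widehat{\mathcal{G}^{k+1}}\hookrightarrow\widehat{\mathcal{G}}$ induces an isomorphism $H_j(\widehat{\mathcal{G}^{k+1}})\cong H_j(\widehat{\mathcal{G}})$.
   Context: For a graph $\mathcal{H}$, $\widehat{\mathcal{H}}$ denotes its clique (flag) complex, whose $r$-simplices are the sets of $r+1$ pairwise adjacent vertices. Homology is simplicial homology with coefficients in a fixed field. The $(k+1)$-core of $\mathcal{G}$ is the subgraph obtained by iteratively deleting vertices (with their incident edges) of degree less than $k+1$; equivalently, the largest induced subgraph in which every vertex has degree at least $k+1$. *)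

(* Defs.v *)
From mathcomp Require Import all_boot all_order all_algebra.
Set Implicit Arguments. Unset Strict Implicit. Unset Printing Implicit Defensive.
Import GRing.Theory.
Local Open Scope ring_scope.

(* A finite simple graph on the finType T is given by a symmetric irreflexive
   relation e.  A subgraph induced on a vertex set V : {set T} is (V, e). *)

Section Defs.
Variables (T : finType) (e : rel T).

(* (k+1)-core: iteratively delete vertices of degree < k1 (here k1 = k+1).
   One step deletes all currently low-degree vertices; #|T| steps suffice
   for stabilisation. *)
Definition core_step (k1 : nat) (X : {set T}) : {set T} :=
  [set v in X | (k1 <= #|[set u in X | e v u]|)%N].
Definition core (k1 : nat) : {set T} := iter #|T| (core_step k1) setT.

(* simplices of the clique complex of the subgraph induced on V:
   sets of pairwise adjacent vertices of V; an r-simplex has r+1 vertices. *)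
Definition is_clique (V : {set T}) (s : {set T}) : bool :=
  (s \subset V) && [forall u in s, forall v in s, (u != v) ==> e u v].
Definition is_simplex (V : {set T}) (r : nat) (s : {set T}) : bool :=
  is_clique V s && (#|s| == r.+1).

Variable F : fieldType.

(* simplicial chains with coefficients in F: finitely supported functions on
   simplices; an r-chain of the clique complex on V is a function on vertex
   sets supported on r-simplices. Simplices are oriented by the total order
   on T given by enum_rank. *)
Definition is_chain (V : {set T}) (r : nat) (c : {ffun {set T} -> F}) : Prop :=
  forall s, c s != 0 -> is_simplex V r s.

Definition bsign (v : T) (t : {set T}) : F :=
  (-1) ^+ #|[set u in t | (enum_rank u < enum_rank v)%N]|.

(* simplicial boundary: (d c)(t) = sum_{v notin t} sign * c(t + v),
   i.e. d [v_0,...,v_r] = sum_i (-1)^i [v_0,..,^v_i,..,v_r]. *)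
Definition bd (c : {ffun {set T} -> F}) : {ffun {set T} -> F} :=
  [ffun t => \sum_(v in ~: t) bsign v t * c (v |: t)].

Definition is_cycle (V : {set T}) (r : nat) (c : {ffun {set T} -> F}) : Prop :=
  is_chain V r c /\ bd c = 0.
Definition is_boundary (V : {set T}) (r : nat) (c : {ffun {set T} -> F}) : Prop :=
  exists d, is_chain V r.+1 d /\ bd d = c.

(* For W \subset V, the inclusion of clique complexes induces a map
   H_r(W) -> H_r(V), [z] |-> [z] (well defined since boundaries in W are
   boundaries in V).  It is an isomorphism iff it is injective and
   surjective on homology classes: *)
Definition inclusion_induces_iso (W V : {set T}) (r : nat) : Prop :=
  (forall z, is_cycle W r z -> is_boundary V r z -> is_boundary W r z) /\
  (forall z, is_cycle V r z ->
     exists z', is_cycle W r z' /\ is_boundary V r (z - z')).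

End Defs.

(* Main.v *)
Require Import Defs.
From mathcomp Require Import all_boot all_order all_algebra.
Import GRing.Theory.
Local Open Scope ring_scope.

Section Aux.
Variables (F : fieldType) (T : finType) (e : rel T).
Hypotheses (e_sym : symmetric e) (e_irr : irreflexive e).
Variables (k j : nat).
Hypotheses (hk : (1 <= k)%N) (hj : (k <= j)%N).

Let X i := iter i (core_step e k.+1) setT.

Lemma cyc_supp (c : {ffun {set T} -> F}) : is_cycle e setT j c ->
  forall i s, c s != 0 -> s \subset X i.
Proof.
move=> [ch bd0]; elim=> [|i IH] s cs; first exact: subsetT.
have /andP[/andP[_ cl] /eqP cards] := ch s cs.
have sX := IH s cs.
rewrite /X /= /core_step -/(X i); apply/subsetP => v vs.
rewrite inE (subsetP sX v vs) /=.
rewrite leqNgt; apply/negP => degv.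
set N := [set u in X i | e v u] in degv.
have sub : s :\ v \subset N.
  apply/subsetP => u; rewrite !inE => /andP[uv us].
  rewrite (subsetP sX u us) /=.
  by move/forallP: cl => /(_ v) /implyP /(_ vs) /forallP /(_ u) /implyP /(_ us) /implyP; apply; rewrite eq_sym.
have cardsv : #|s :\ v| = j.
  by move: (cardsD1 v s); rewrite vs cards add1n => -[].
have eqN : s :\ v = N.
  by apply/eqP; rewrite eqEcard sub cardsv; rewrite ltnS in degv; exact: leq_trans degv hj.
have : (0 < #|s :\ v|)%N by rewrite cardsv; exact: leq_trans hk hj.
case/card_gt0P => w wsv.
have wv : w != v by move: wsv; rewrite !inE => /andP[].
have ws : w \in s by move: wsv; rewrite !inE => /andP[].
set t := s :\ w.
have : bd c t = 0 by rewrite bd0 ffunE.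
rewrite ffunE (bigD1 w) /=; last by rewrite inE !inE eqxx.
rewrite setD1K // big1 ?addr0.
  move/eqP; rewrite mulf_eq0 signr_eq0 /=; exact/negP.
move=> u /andP[ut uw]; apply/eqP; rewrite mulf_eq0; apply/orP; right; apply/negPn/negP => cu.
have /andP[/andP[_ cl'] _] := ch _ cu.
have uX := IH _ cu.
have vt : v \in t by rewrite !inE eq_sym wv.
have ut' : u \notin t by move: ut; rewrite inE.
have uv : u != v by apply/eqP => E; move: ut'; rewrite E vt.
have : u \in N.
  rewrite inE (subsetP uX u (setU11 _ _)) /=.
  move/forallP: cl' => /(_ v) /implyP.
  have -> : v \in u |: t by rewrite inE vt orbT.
  move=> /(_ isT) /forallP /(_ u) /implyP /(_ (setU11 _ _)) /implyP; apply.
  by rewrite eq_sym.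
rewrite -eqN !inE uv /= => us.
by move: ut'; rewrite !inE us uw.
Qed.

Lemma simp_supp s : is_simplex e setT j.+1 s -> forall i, s \subset X i.
Proof.
move=> /andP[/andP[_ cl] /eqP cards]; elim=> [|i IH]; first exact: subsetT.
rewrite /X /= /core_step -/(X i); apply/subsetP => v vs.
rewrite inE (subsetP IH v vs) /=.
have sub : s :\ v \subset [set u in X i | e v u].
  apply/subsetP => u; rewrite !inE => /andP[uv us].
  rewrite (subsetP IH u us) /=.
  by move/forallP: cl => /(_ v) /implyP /(_ vs) /forallP /(_ u) /implyP /(_ us) /implyP; apply; rewrite eq_sym.
have cardsv : #|s :\ v| = j.+1.
  by move: (cardsD1 v s); rewrite vs cards add1n => -[].
apply: leq_trans (subset_leq_card sub); by rewrite cardsv ltnS.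
Qed.

End Aux.

Theorem mainTheorem2 (F : fieldType) (T : finType) (e : rel T)
  (e_sym : symmetric e) (e_irr : irreflexive e) (k j : nat)
  (hk : (1 <= k)%N) (hj : (k <= j)%N) :
  let C := core e k.+1 in
  (forall c : {ffun {set T} -> F}, is_cycle e setT j c ->
     forall s, c s != 0 -> is_simplex e C j s) /\
  (forall s, is_simplex e setT j.+1 s -> is_simplex e C j.+1 s) /\
  inclusion_induces_iso e F C setT j.
Proof.
move=> C.
have P1 : forall c : {ffun {set T} -> F}, is_cycle e setT j c ->
     forall s, c s != 0 -> is_simplex e C j s.
  move=> c cy s cs; have := cy.1 s cs.
  rewrite /is_simplex /is_clique => /andP[/andP[_ ->] ->].
  by rewrite (@cyc_supp F T e k j hk hj c cy #|T| s cs).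
have P2 : forall s, is_simplex e setT j.+1 s -> is_simplex e C j.+1 s.
  move=> s hs; have := hs.
  rewrite /is_simplex /is_clique => /andP[/andP[_ ->] ->].
  by rewrite (@simp_supp T e k j hj s hs #|T|).
split; first exact: P1.
split; first exact: P2.
split.
  move=> z _ [d [dch dbd]]; exists d; split => // s ds; exact: P2 (dch s ds).
move=> z zc; exists z; split.
  split; last exact: zc.2.
  exact: P1.
exists 0; split; last by rewrite subrr; apply/ffunP => t; rewrite !ffunE big1 // => u _; rewrite ffunE mulr0.
by move=> s; rewrite ffunE eqxx.
Qed.
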